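(* Let $G$ be a finite non-abelian group satisfying condition (Con). Then the algebraic connectivity of $\mathcal C_G$ (the second smallest eigenvalue, counted with multiplicity, of its Laplacian matrix) equals $|Z(G)|$.
   Context: For a finite group $G$, the commuting graph $\mathcal C_G$ is the simple undirected graph with vertex set $G$ in which distinct $u,v\in G$ are adjacent iff $uv=vu$. The Laplacian matrix of a simple graph is $L=D-A$ ($A$ adjacency matrix, $D$ diagonal degree matrix). $Z(G)$ is the center of $G$ and $C(v)=\{w\in G: wv=vw\}$ the centralizer of $v$. Condition (Con): for all $u,v\in G\setminus Z(G)$, either $C(u)=C(v)$ or $C(u)\cap C(v)=Z(G)$. *)

(* Defs.v *)
From mathcomp Require Import all_boot all_order all_algebra all_fingroup all_solvable all_field.
Set Implicit Arguments. Unset Strict Implicit. Unset Printing Implicit Defensive.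
Import Order.TTheory GRing.Theory Num.Theory.
Local Open Scope ring_scope.

Definition cg_adj (gT : finGroupType) (u v : gT) : bool :=
  (u != v) && (u * v == v * u)%g.

Definition cg_deg (gT : finGroupType) (G : {set gT}) (v : gT) : nat :=
  #|[set w in G | cg_adj v w]|.

(* Laplacian L = D - A of the commuting graph of G, vertices of G indexed
   by 'I_#|G| via enum_val; entries in algC (they are integers). *)
Definition cg_laplacian (gT : finGroupType) (G : {set gT}) : 'M[algC]_#|G| :=
  \matrix_(i, j) ((cg_deg G (enum_val i))%:R *+ (i == j)
                  - (cg_adj (enum_val i) (enum_val j))%:R).

Definition eigenvalues_mult n (A : 'M[algC]_n) : seq algC :=
  sval (closed_field_poly_normal (char_poly A)).

(* Second smallest eigenvalue (counted with multiplicity).  Meaningful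
   when all eigenvalues are real (e.g. for a real symmetric matrix). *)
Definition algebraic_connectivity n (A : 'M[algC]_n) : algC :=
  nth 0 (sort <=%R (eigenvalues_mult A)) 1.

Definition Con (gT : finGroupType) (G : {set gT}) : Prop :=
  (forall u v, u \in G :\: 'Z(G) -> v \in G :\: 'Z(G) ->
    'C_G[u] = 'C_G[v] \/ 'C_G[u] :&: 'C_G[v] = 'Z(G))%g.
Arguments Con [gT] G%_g.

(* Main.v *)
Require Import Defs.
From mathcomp Require Import all_boot all_order all_algebra all_fingroup all_solvable all_field.
From mathcomp Require Import ring.
Set Implicit Arguments. Unset Strict Implicit. Unset Printing Implicit Defensive.
Import Order.TTheory GRing.Theory Num.Theory.
Local Open Scope ring_scope.

Lemma inCG (gT : finGroupType) (G : {set gT}) (u w : gT) :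
  (w \in 'C_G[u])%g = (w \in G) && (w * u == u * w)%g.
Proof. by rewrite inE cent1E. Qed.

Lemma sum_adj (gT : finGroupType) (G : {group gT}) (u : gT) (F : gT -> algC) :
  F u = 0 ->
  \sum_(w in G) F w *+ cg_adj u w = \sum_(w in 'C_G[u]%g) F w.
Proof.
move=> Fu0.
have -> : \sum_(w in 'C_G[u]%g) F w = \sum_(w in G | (w * u == u * w)%g) F w.
  by apply: eq_bigl => w; rewrite inCG.
rewrite big_mkcondr /=; apply: eq_bigr => w wG.
rewrite /cg_adj.
have [->|nwu] := eqVneq w u; first by rewrite Fu0 mul0rn; case: ifP.
by rewrite /= [X in _ = if X then _ else _]eq_sym; case: ifP.
Qed.

Lemma cgL_row (gT : finGroupType) (G : {group gT}) (f : gT -> algC) j :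
  ((\row_i f (enum_val i)) *m cg_laplacian G) 0 j =
  \sum_(w in 'C_G[enum_val j]%g) (f (enum_val j) - f w).
Proof.
set u := enum_val j.
rewrite !mxE.
transitivity (\sum_(i < #|G|) (f u - f (enum_val i)) *+ cg_adj u (enum_val i)).
  have adjC : forall a b : gT, cg_adj a b = cg_adj b a.
    by move=> a b; rewrite /cg_adj eq_sym [(b * a == _)%g]eq_sym.
  rewrite (eq_bigr (fun i => f (enum_val i) * ((cg_deg G u)%:R *+ (i == j))
      - f (enum_val i) * (cg_adj u (enum_val i))%:R)); last first.
    move=> i _; rewrite !mxE mulrBr adjC; congr (_ - _).
    by have [->|] := eqVneq i j; rewrite ?mulr0n ?mulr1n.
  rewrite sumrB (bigD1 j) //= eqxx mulr1n big1 ?addr0 => [|i /negbTE ->]; last by rewrite mulr0n mulr0.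
  rewrite [RHS](eq_bigr (fun i => f u *+ cg_adj u (enum_val i) - f (enum_val i) *+ cg_adj u (enum_val i))); last by move=> i _; rewrite mulrnBl.
  rewrite sumrB; congr (_ - _); last by apply: eq_bigr => i _; rewrite mulr_natr.
  rewrite [RHS](eq_bigr (fun i => f u * (cg_adj u (enum_val i))%:R)); last by move=> i _; rewrite mulr_natr.
  rewrite -mulr_sumr; congr (_ * _).
  rewrite /cg_deg -sum1_card.
  rewrite (eq_bigl (fun w => (w \in G) && cg_adj u w)); last by move=> w; rewrite inE.
  rewrite big_mkcondr /= natr_sum.
  rewrite (big_enum_val (fun w => ((if cg_adj u w then 1 else 0)%N)%:R)).
  by apply: eq_bigr => i _; case: (cg_adj _ _).
rewrite -[LHS](big_enum_val (fun w => (f u - f w) *+ cg_adj u w)).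
by apply: sum_adj; rewrite subrr.
Qed.

Section Key.
Variables (gT : finGroupType) (G : {group gT}).
Hypothesis HCon : Con G.

Lemma Z_sub_C u : u \in G -> ('Z(G) \subset 'C_G[u])%g.
Proof.
move=> uG; apply/subsetP => w /centerP [wG cw].
by rewrite inCG wG; apply/eqP; apply: cw.
Qed.

Lemma C_Z u : u \in 'Z(G)%g -> 'C_G[u]%g = G.
Proof.
move=> /centerP [uG cu]; apply/setP => w; rewrite inCG.
case wG: (w \in G) => //=; apply/eqP; symmetry; exact: cu.
Qed.

Lemma uC u : u \in G -> u \in 'C_G[u]%g.
Proof. by move=> uG; rewrite inCG uG eqxx. Qed.

Lemma Con_same u w : u \in G -> u \notin 'Z(G)%g -> w \in 'C_G[u]%g ->
  w \notin 'Z(G)%g -> 'C_G[w]%g = 'C_G[u]%g.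
Proof.
move=> uG uZ wC wZ.
have wG : w \in G by move: wC; rewrite inCG => /andP[].
have uD : u \in (G :\: 'Z(G))%g by rewrite in_setD uZ uG.
have wD : w \in (G :\: 'Z(G))%g by rewrite in_setD wZ wG.
have [E|E] := HCon uD wD; first by [].
have : w \in ('C_G[u] :&: 'C_G[w])%g by rewrite inE wC uC.
by rewrite E (negbTE wZ).
Qed.

Lemma C_gt0 u : (0 < #|'C_G[u]%g|)%N.
Proof. apply/card_gt0P; exists 1%g; by rewrite inCG group1 mul1g mulg1 eqxx. Qed.

Variables (f : gT -> algC) (lam : algC).
Hypothesis H : forall u, u \in G -> \sum_(w in 'C_G[u]%g) (f u - f w) = lam * f u.

Lemma Hp u : u \in G ->
  (#|'C_G[u]%g|%:R - lam) * f u = \sum_(w in 'C_G[u]%g) f w.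
Proof.
move=> uG; have := H uG; rewrite sumrB sumr_const => E.
by rewrite mulrBl -E mulr_natl opprB addrC subrK.
Qed.

Lemma noncentral_eq (sameC : forall u w, u \in G -> w \in G -> 'C_G[u]%g = 'C_G[w]%g -> f u = f w)
  u : u \in G -> u \notin 'Z(G)%g ->
  (#|'Z(G)%g|%:R - lam) * f u = #|'Z(G)%g|%:R * f 1%g.
Proof.
move=> uG uZ; have := H uG.
rewrite (big_setID 'Z(G)%g) /= (setIidPr (Z_sub_C uG)).
rewrite [X in _ + X = _]big1; last first.
  move=> w; rewrite inE => /andP [wZ wC].
  rewrite (@sameC w u) ?subrr //.
    by move: wC; rewrite inCG => /andP[].
  exact: Con_same.
rewrite (eq_bigr (fun _ => f u - f 1%g)); last first.
  move=> w wZ; congr (_ - _); apply: sameC => //.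
    by move: wZ => /centerP [].
  by rewrite (C_Z wZ) (C_Z (group1 _)).
rewrite sumr_const addr0 => E.
rewrite -mulr_natl in E; move: E; move: (#|'Z(G)%g|%:R) => z E.
rewrite mulrBl -E; ring.
Qed.


Hypothesis hC : forall u, u \in G -> lam != #|'C_G[u]%g|%:R.

Lemma sameC u w : u \in G -> w \in G -> 'C_G[u]%g = 'C_G[w]%g -> f u = f w.
Proof.
move=> uG wG E.
have nz : (#|'C_G[u]%g|%:R - lam) != 0 by rewrite subr_eq0 eq_sym hC.
apply: (mulfI nz); rewrite Hp // E Hp //.
Qed.

Lemma z_gt0 : (0 < #|'Z(G)%g|)%N.
Proof. by apply/card_gt0P; exists 1%g; exact: group1. Qed.

Lemma z_neq0 : (#|'Z(G)%g|%:R : algC) != 0.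
Proof. by rewrite pnatr_eq0 -lt0n z_gt0. Qed.

Lemma const_on_G (lam0 : lam = 0) u : u \in G -> f u = f 1%g.
Proof.
move=> uG; case uZ: (u \in 'Z(G)%g).
  by apply: sameC => //; rewrite (C_Z uZ) (C_Z (group1 _)).
have := noncentral_eq sameC uG (negbT uZ); rewrite lam0 subr0.
by move/(mulfI z_neq0).
Qed.

Lemma zero_on_G (lam0 : lam != 0) (lamz : lam != #|'Z(G)%g|%:R) u :
  u \in G -> f u = 0.
Proof.
have zl : (#|'Z(G)%g|%:R - lam) != 0 by rewrite subr_eq0 eq_sym.
have G1 : (1%g : gT) \in G by [].
have H1 := H G1; rewrite (C_Z (group1 _)) in H1.
rewrite (big_setID 'Z(G)%g) /= (setIidPr (center_sub G)) in H1.
rewrite big1 ?add0r in H1; last first.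
  move=> w wZ; rewrite (@sameC w 1%g) ?subrr //.
    by move: wZ => /centerP [].
  by rewrite (C_Z wZ) (C_Z (group1 _)).
set z := #|'Z(G)%g|%:R in zl lamz *.
set b := z * f 1%g / (z - lam).
have fb : forall w, w \in (G :\: 'Z(G))%g -> f w = b.
  move=> w; rewrite in_setD => /andP [wZ wG].
  have := noncentral_eq sameC wG wZ; rewrite -/z => E.
  by rewrite /b -E; field.
rewrite (eq_bigr (fun _ => f 1%g - b)) in H1; last by move=> w /fb ->.
rewrite sumr_const -mulr_natl in H1.
have hn := hC G1; rewrite (C_Z (group1 _)) -(cardsID 'Z(G)%g G) (setIidPr (center_sub G)) natrD in hn.
move: H1 hn; rewrite -/z; move: (#|(G :\: 'Z(G))%g|%:R) => m H1 hn.
have a0 : f 1%g = 0.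
  have : lam * f 1%g * (z + m - lam) = 0.
    have -> : lam * f 1%g * (z + m - lam) = - ((z - lam) * (m * (f 1%g - b) - lam * f 1%g)
                 + m * (b * (z - lam) - z * f 1%g)).
      by rewrite /b; field.
    by rewrite H1 subrr mulr0 /b divfK // subrr mulr0 addr0 oppr0.
  have zm : z + m != lam by rewrite eq_sym.
  move/eqP; rewrite !mulf_eq0 (negbTE lam0) /= subr_eq0 (negbTE zm) orbF.
  by move/eqP.
move=> uG; case uZ: (u \in 'Z(G)%g).
  rewrite -a0; apply: sameC => //; by rewrite (C_Z uZ) (C_Z (group1 _)).
by rewrite fb ?in_setD ?uZ // /b a0 mulr0 mul0r.
Qed.

End Key.

Section Zeig.
Variables (gT : finGroupType) (G : {group gT}).
Hypothesis HCon : Con G.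

Lemma memC_sym x y : x \in G -> y \in G -> (x \in 'C_G[y]%g) = (y \in 'C_G[x]%g).
Proof. by move=> xG yG; rewrite !inCG xG yG eq_sym. Qed.

Lemma z_eigen (f : gT -> algC) :
  (forall w, w \in 'Z(G)%g -> f w = 0) ->
  (forall u w, u \in G -> u \notin 'Z(G)%g -> w \in 'C_G[u]%g -> w \notin 'Z(G)%g -> f w = f u) ->
  \sum_(w in G) f w = 0 ->
  forall u, u \in G -> \sum_(w in 'C_G[u]%g) (f u - f w) = #|'Z(G)%g|%:R * f u.
Proof.
move=> fZ fC fS u uG; case uZ: (u \in 'Z(G)%g).
    rewrite (C_Z uZ) fZ // mulr0 (eq_bigr (fun w => - f w)); last by move=> w _; rewrite sub0r.
  by rewrite sumrN fS oppr0.
rewrite (big_setID 'Z(G)%g) /= (setIidPr (Z_sub_C uG)).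
rewrite [X in _ + X]big1 ?addr0; last first.
  move=> w; rewrite in_setD => /andP [wZ wC].
  by rewrite (fC u w) ?uZ // subrr.
rewrite (eq_bigr (fun _ => f u)); last by move=> w wZ; rewrite (fZ w) // subr0.
by rewrite sumr_const mulr_natl.
Qed.

Lemma sum_ind (A : {set gT}) : A \subset G ->
  \sum_(w in G) ((w \in A)%:R : algC) = #|A|%:R.
Proof.
move=> AG; rewrite (eq_bigr (fun w => if w \in A then 1 else 0)); last by move=> w _; case: (w \in A).
rewrite -big_mkcondr /=.
rewrite (eq_bigl (fun w => w \in A)); last first.
  by move=> w; apply/andP/idP => [[]|wA] //; split => //; apply: (subsetP AG).
by rewrite sumr_const.
Qed.

End Zeig.

Section Mat.
Variables (gT : finGroupType) (G : {group gT}).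

Lemma Lsym i j : cg_laplacian G i j = cg_laplacian G j i.
Proof.
rewrite !mxE /cg_adj eq_sym [(enum_val j * _ == _)%g]eq_sym.
have [->|nij] := eqVneq i j; first by [].
by rewrite [enum_val j == _]eq_sym.
Qed.

Lemma colsum j : \sum_i cg_laplacian G i j = 0.
Proof.
have := cgL_row (G:=G) (fun _ => 1) j; rewrite !mxE.
under eq_bigr => i _ do rewrite mxE mul1r.
move=> ->; apply: big1 => w _; exact: subrr.
Qed.

Lemma rowsum i : \sum_j cg_laplacian G i j = 0.
Proof.
transitivity (\sum_j cg_laplacian G j i); last exact: colsum.
by apply: eq_bigr => j _; exact: Lsym.
Qed.

Definition Emx : 'M[algC]_#|G| := \matrix_(i, j) ((val j == 0)%N)%:R.

Lemma LE0 : cg_laplacian G *m Emx = 0.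
Proof.
apply/matrixP => i j; rewrite [LHS]mxE [RHS]mxE.
under eq_bigr => k _ do rewrite [Emx k j]mxE.
by rewrite -mulr_suml rowsum mul0r.
Qed.

Definition fv (v : 'rV[algC]_#|G|) (g : gT) : algC := v 0 (enum_rank_in (group1 G) g).

Lemma fvE v : v = \row_i fv v (enum_val i).
Proof. by apply/rowP => i; rewrite mxE /fv enum_valK_in. Qed.

Lemma eigen_eq v lam : v *m cg_laplacian G = lam *: v ->
  forall u, u \in G -> \sum_(w in 'C_G[u]%g) (fv v u - fv v w) = lam * fv v u.
Proof.
move=> E u uG; set j := enum_rank_in (group1 G) u.
have := congr1 (fun M : 'rV[algC]_#|G| => M 0 j) E; rewrite {1}(fvE v) cgL_row mxE.
rewrite /j enum_rankK_in //.
Qed.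

End Mat.

Section Roots.
Variables (gT : finGroupType) (G : {group gT}).
Hypothesis HCon : Con G.
Local Notation L := (cg_laplacian G).
Local Notation z := #|'Z(G)%g|.

Lemma v0_of v : (forall u, u \in G -> fv (G:=G) v u = 0) -> v = 0.
Proof.
move=> h; rewrite (fvE v); apply/rowP => i; rewrite !mxE; apply: h; exact: enum_valP.
Qed.

Lemma root_class r : root (char_poly L) r -> r = 0 \/ exists m, (z <= m)%N /\ r = m%:R.
Proof.
rewrite -eigenvalue_root_char => /eigenvalueP [v Ev vn0].
have H := eigen_eq Ev.
have [->|r0] := eqVneq r 0; first by left.
right.
have [rz|rz] := eqVneq r z%:R; first by exists z.
case: (boolP [exists u in G, r == #|'C_G[u]%g|%:R]).
  case/exists_inP => u uG /eqP ->; exists #|'C_G[u]%g|; split => //.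
  exact: subset_leq_card (Z_sub_C uG).
move/exists_inPn => hC.
have := zero_on_G HCon H hC r0 rz; move/v0_of => v0.
by rewrite v0 eqxx in vn0.
Qed.

Lemma root0 : root (char_poly L) 0.
Proof.
rewrite -eigenvalue_root_char; apply/eigenvalueP.
exists (\row_(i < #|G|) (1 : algC)).
  rewrite scale0r; apply/rowP => j; rewrite mxE.
  under eq_bigr => i _ do rewrite mxE mul1r.
  by rewrite colsum mxE.
apply/eqP => /rowP /(_ (enum_rank_in (group1 G) 1%g)); rewrite !mxE => /eqP.
by rewrite oner_eq0.
Qed.

End Roots.

Section Roots2.
Variables (gT : finGroupType) (G : {group gT}).
Hypothesis HCon : Con G.
Local Notation L := (cg_laplacian G).
Local Notation z := #|'Z(G)%g|.

Lemma rootz : ~~ abelian G -> root (char_poly L) z%:R.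
Proof.
move=> nab.
have [a [b [aG bG nab']]] : exists a b, [/\ a \in G, b \in G & (a * b != b * a)%g].
  case: (pickP [pred p : gT * gT | (p.1 \in G) && (p.2 \in G) && (p.1 * p.2 != p.2 * p.1)%g]).
    by move=> [a b] /= /andP [/andP [aG bG] ab]; exists a, b.
  move=> none; case/negP: nab; rewrite abelianE; apply/subsetP => x xG.
  apply/centP => y yG; have := none (y, x); rewrite /= yG xG /= => /negbFE /eqP.
  by [].
set A := ('C_G[a] :\: 'Z(G))%g; set B := ('C_G[b] :\: 'Z(G))%g.
have aZ : a \notin 'Z(G)%g.
  apply/negP => /centerP [_ ca]; by rewrite (ca b bG) eqxx in nab'.
have bZ : b \notin 'Z(G)%g.
  apply/negP => /centerP [_ cb]; by rewrite (cb a aG) eqxx in nab'.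
pose f w : algC := #|B|%:R * (w \in A)%:R - #|A|%:R * (w \in B)%:R.
have AG : A \subset G by apply/subsetP => w; rewrite in_setD inCG => /andP [_ /andP []].
have BG : B \subset G by apply/subsetP => w; rewrite in_setD inCG => /andP [_ /andP []].
have fZ : forall w, w \in 'Z(G)%g -> f w = 0.
  by move=> w wZ; rewrite /f !in_setD wZ /= !mulr0 subrr.
have memA : forall u w, u \in G -> u \notin 'Z(G)%g -> w \in 'C_G[u]%g -> w \notin 'Z(G)%g ->
    forall c, c \in G -> (w \in 'C_G[c]%g) = (u \in 'C_G[c]%g).
  move=> u w uG uZ wC wZ c cG.
  have wG : w \in G by move: wC; rewrite inCG => /andP [].
  by rewrite memC_sym // (Con_same HCon uG uZ wC wZ) memC_sym.
have fC : forall u w, u \in G -> u \notin 'Z(G)%g -> w \in 'C_G[u]%g -> w \notin 'Z(G)%g -> f w = f u.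
  move=> u w uG uZ wC wZ.
  by rewrite /f !in_setD (negbTE wZ) (negbTE uZ) /= (memA u w) // (memA u w).
have fS : \sum_(w in G) f w = 0.
  rewrite sumrB -!mulr_sumr !sum_ind // mulrC subrr //.
have Hz := z_eigen fZ fC fS.
rewrite -eigenvalue_root_char; apply/eigenvalueP.
exists (\row_i f (enum_val i)).
  apply/rowP => j; rewrite cgL_row Hz ?enum_valP // !mxE //.
apply/eqP => /rowP /(_ (enum_rank_in (group1 G) a)); rewrite !mxE enum_rankK_in //.
have aA : a \in A by rewrite in_setD aZ inCG aG eqxx.
have aB : a \notin B by rewrite in_setD inCG aG (negbTE nab') /= andbF.
have bB : b \in B by rewrite in_setD bZ inCG bG eqxx.
rewrite /f aA (negbTE aB) mulr1 mulr0 subr0 => /eqP.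
rewrite pnatr_eq0 => /eqP /card0_eq /(_ b).
by rewrite bB.
Qed.

End Roots2.

Section Det.
Variables (gT : finGroupType) (G : {group gT}).
Hypothesis HCon : Con G.
Local Notation L := (cg_laplacian G).
Local Notation E := (Emx G).

Lemma n_gt0 : (0 < #|G|)%N.
Proof. by apply/card_gt0P; exists 1%g. Qed.

Lemma detB : \det (L + E) != 0.
Proof.
apply/negP => /det0P [v vn0 vB].
set s := \sum_i v 0 i.
have vE : forall j, (v *m E) 0 j = s * ((val j == 0)%N)%:R.
  move=> j; rewrite mxE /s mulr_suml; apply: eq_bigr => i _; by rewrite mxE.
have vLE : v *m L = - (v *m E) by apply/eqP; rewrite -addr_eq0 -mulmxDr vB.
have vL : forall j, (v *m L) 0 j = - (s * ((val j == 0)%N)%:R).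
  by move=> j; rewrite vLE [LHS]mxE vE.
have sumL : \sum_j (v *m L) 0 j = 0.
  under eq_bigr => j _ do rewrite mxE.
  rewrite exchange_big /=; apply: big1 => i _.
  by rewrite -mulr_sumr rowsum mulr0.
have s0 : s = 0.
  move: sumL; under eq_bigr => j _ do rewrite vL.
  rewrite sumrN (bigD1 (Ordinal n_gt0)) //= mulr1 big1 ?addr0; first by move/eqP; rewrite oppr_eq0 => /eqP.
  by move=> j /negbTE; rewrite -val_eqE /= => ->; rewrite mulr0.
have vL0 : v *m L = 0 *: v.
  by rewrite scale0r; apply/rowP => j; rewrite vL s0 mul0r oppr0 mxE.
have H := eigen_eq vL0.
have hC : forall u, u \in G -> (0 : algC) != #|'C_G[u]%g|%:R.
  by move=> u _; rewrite eq_sym pnatr_eq0 -lt0n C_gt0.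
have fc : forall u, u \in G -> fv (G:=G) v u = fv (G:=G) v 1%g.
  by move=> u uG; apply: (const_on_G HCon H hC).
have : s = fv (G:=G) v 1%g *+ #|G|.
  rewrite /s {1}(fvE v); under eq_bigr => i _ do rewrite mxE fc ?enum_valP //.
  by rewrite sumr_const card_ord.
rewrite s0 => /eqP; rewrite eq_sym mulrn_eq0 eqn0Ngt n_gt0 /= => /eqP f10.
have : v = 0 by apply: v0_of => u uG; rewrite fc.
by move=> v0; rewrite v0 eqxx in vn0.
Qed.

End Det.

Section Poly.
Variables (gT : finGroupType) (G : {group gT}).
Local Notation L := (cg_laplacian G).
Local Notation E := (Emx G).

Lemma cp_ident : char_poly L * char_poly E = 'X ^+ #|G| * char_poly (L + E).
Proof.
have M : char_poly_mx L *m char_poly_mx E = 'X *: char_poly_mx (L + E).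
  rewrite /char_poly_mx mulmxBl !mulmxBr mul_scalar_mx mul_mx_scalar -map_mxM LE0 map_mx0 subr0.
  rewrite map_mxD scalerBr scalerDr mul_scalar_mx opprD addrA.
  by rewrite addrAC.
by rewrite /char_poly -det_mulmx M detZ.
Qed.

Lemma cpE : char_poly E = ('X - 1) * 'X ^+ #|G|.-1.
Proof.
rewrite char_poly_trig; last first.
  apply/is_trig_mxP => i j lij; rewrite mxE.
  by case: j lij => [[|j] ?] //=.
rewrite (bigD1 (Ordinal (n_gt0 G))) //= mxE eqxx; congr (_ * _).
rewrite (eq_bigr (fun _ => 'X)); last first.
  move=> i ni0; rewrite mxE.
  have -> : (val i == 0%N) = false.
    by apply/negbTE; apply: contra ni0 => /eqP h; apply/eqP/val_inj.
  by rewrite subr0.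
rewrite prodr_const; congr (_ ^+ _).
by rewrite cardC1 card_ord.
Qed.

End Poly.

Section Mult.
Variables (gT : finGroupType) (G : {group gT}).
Hypothesis HCon : Con G.
Local Notation L := (cg_laplacian G).
Local Notation E := (Emx G).

Lemma noX2 q : char_poly L <> 'X ^+ 2 * q.
Proof.
move=> Hq.
have := cp_ident G; rewrite Hq cpE.
have hn : #|G| = (#|G|.-1).+1 by rewrite prednK // n_gt0.
rewrite [in 'X ^+ #|G|]hn.
move: (#|G|.-1) => k h.
have Xk : ('X ^+ k : {poly algC}) != 0 by rewrite expf_neq0 // polyX_eq0.
have X0 : ('X : {poly algC}) != 0 by rewrite polyX_eq0.
have h2 : char_poly (L + E) = 'X * (q * ('X - 1)).
  apply: (mulfI Xk); apply: (mulfI X0).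
  have e1 : 'X * ('X^k * char_poly (L + E)) = 'X ^+ k.+1 * char_poly (L + E).
    by rewrite mulrA -exprS.
  rewrite e1 -h; ring.
have := detB HCon; rewrite -(@mulrI_eq0 _ ((-1) ^+ #|G|)); last by apply/lregP; rewrite signr_eq0.
by rewrite -char_poly_det h2 coef0M coefX mul0r eqxx.
Qed.

End Mult.

Lemma prodX_count (s : seq algC) (x : algC) :
  \prod_(r <- s) ('X - r%:P) =
  ('X - x%:P) ^+ (count (pred1 x) s) * \prod_(r <- filter (predC1 x) s) ('X - r%:P).
Proof.
elim: s => [|a s IH]; first by rewrite !big_nil expr0 mul1r.
rewrite big_cons IH /=; have [->|nax] := eqVneq a x.
  by rewrite /= exprS mulrA.
rewrite /= big_cons /= add0n; ring.
Qed.

Unset Implicit Arguments.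
Set Strict Implicit.

Theorem corollary2p11 (gT : finGroupType) (G : {group gT}) :
  ~~ abelian G -> Con G ->
  algebraic_connectivity (cg_laplacian G) = (#|'Z(G)%g|)%:R.
Proof.
move=> nab HCon.
rewrite /algebraic_connectivity /eigenvalues_mult.
case: (closed_field_poly_normal _) => s /= Hs.
rewrite (monicP (char_poly_monic _)) scale1r in Hs.
set z := #|'Z(G)%g|.
have z1 : (1 <= z)%N by apply: z_gt0.
have cls : forall r, r \in s -> r = 0 \/ exists m, (z <= m)%N /\ r = m%:R.
  by move=> r rs; apply: (root_class HCon); rewrite Hs root_prod_XsubC.
have s0 : 0 \in s by rewrite -root_prod_XsubC -Hs; apply: root0.
have sz : z%:R \in s by rewrite -root_prod_XsubC -Hs; apply: rootz.
have c0 : (count (pred1 (0%R:algC)) s <= 1)%N.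
  rewrite leqNgt; apply/negP => c2.
  apply: (noX2 HCon (q := ('X - 0%:P) ^+ (count (pred1 (0%R:algC)) s - 2) *
     \prod_(r <- filter (predC1 (0%R:algC)) s) ('X - r%:P))).
  rewrite Hs (prodX_count s (0%R:algC)) polyC0 subr0 mulrA -exprD subnKC //.
have real_s : all [pred x : algC | x \is Num.real] s.
  apply/allP => r /cls [->|[m [_ ->]]]; [exact: real0 | exact: realn].
have srt := sort_sorted_in (leT := <=%R) (fun x y (xr : x \is Num.real) yr => real_leVge xr yr) real_s.
have pe := perm_sort <=%R s.
have pt : perm_eq (sort <=%R s) s by rewrite pe.
have mem_t : forall r, (r \in sort <=%R s) = (r \in s) by move=> r; apply: perm_mem.
have cnt_t : count (pred1 (0%R:algC)) (sort <=%R s) = count (pred1 (0%R:algC)) s by move/seq.permP: pt => ->.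
move: srt mem_t cnt_t; case: (sort <=%R s) => [|x [|y r]] srt mem_t cnt_t.
- by move: s0; rewrite -mem_t.
- have z0 : (z%:R : algC) != 0 by rewrite pnatr_eq0 -lt0n.
  move: s0 sz; rewrite -!mem_t !inE => /eqP <- /eqP; by move/eqP: z0.
- rewrite /=.
  have xs : x \in s by rewrite -mem_t inE eqxx.
  have ys : y \in s by rewrite -mem_t !inE eqxx orbT.
  have [_ py] := andP srt.
  have ax : all (fun w => x <= w) (y :: r) := order_path_min le_trans srt.
  have ay : all (fun w => y <= w) r := order_path_min le_trans py.
  have z0 : (z%:R : algC) != 0 by rewrite pnatr_eq0 -lt0n.
  have x0 : x = 0.
    case: (cls x xs) => [//|[m [zm xm]]].
    have : (0 : algC) \in x :: y :: r by rewrite mem_t.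
    rewrite inE => /orP [/eqP e|].
      move: e; rewrite xm => /esym/eqP; rewrite pnatr_eq0 => /eqP m0.
      by move: zm z1; rewrite m0 leqn0 => /eqP ->.
    move/(allP ax); rewrite xm lern0 => /eqP m0.
    by move: zm z1; rewrite m0 leqn0 => /eqP ->.
  have y0 : y != 0.
    apply/negP => /eqP y0; move: c0; rewrite -cnt_t /= x0 y0 eqxx /=.
    by rewrite add1n.
  case: (cls y ys) => [y0'|[m [zm ym]]]; first by rewrite y0' eqxx in y0.
  have : (z%:R : algC) \in x :: y :: r by rewrite mem_t.
  rewrite inE x0 (negbTE z0) /= inE => /orP [/eqP -> //|zr].
  have := allP ay _ zr; rewrite ym ler_nat => mz.
  by congr (_%:R); apply/eqP; rewrite eqn_leq mz zm.
Qed.
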